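(* Let $\mathcal{T}$ be an MPQ-tree of an interval graph $G=(V,E)$ and let $x\neq y$ be vertices with $node(x)=node(y)=P$, where $P$ is a P-node that is a leaf of $\mathcal{T}$. Then $(x,y)$ is an interval edge, i.e. $G-(x,y)$ is an interval graph.
   Context: Graphs are finite and simple; for $G=(V,E)$ and $e\in E$, $G-e=(V,E\setminus\{e\})$. An edge $(x,y)\in E$ of an interval graph $G$ is an interval edge if $G-(x,y)$ is an interval graph. An MPQ-tree of an interval graph $G=(V,E)$, $V=\{1,\dots,n\}$, is a rooted plane tree whose nodes are P-nodes and Q-nodes. Each P-node carries a (possibly empty) set of vertices. A Q-node has $k\ge 3$ ordered positions $1,\dots,k$; position $i$ carries a set $S_i\subseteq V$ (the $i$-th section) and a child subtree $T_i$, which may be empty. Every vertex $v$ is assigned to exactly one node $node(v)$: either $v$ lies in the set of the P-node $node(v)$, or $node(v)$ is a Q-node and $v$ lies exactly in the sections $S_{l(v)},\dots,S_{r(v)}$ of it, with $l(v)<r(v)$. For a node with child subtrees $T_1,\dots,T_k$, $V_i$ denotes the set of vertices assigned to nodes of $T_i$ ($V_i=\emptyset$ if $T_i$ is empty). The maximal cliques of $G$ are in bijection with the descending paths from the root which at a P-node continue into one of its children (stopping if there is none) and at a Q-node choose a position $i$ and continue into $T_i$ (stopping if $T_i$ is empty); the clique is the union of the sets of the visited P-nodes and the chosen sections. Reading these cliques left to right gives a linear order of the maximal cliques, and the orders obtained this way after arbitrarily permuting children of P-nodes and reversing the positions of Q-nodes are exactly the orders of the maximal cliques of $G$ in which the cliques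 containing any fixed vertex are consecutive. Moreover, for every Q-node with sections $S_1,\dots,S_k$: (a) $V_1\neq\emptyset$ and $V_k\ne\emptyset$; (b) $S_1\subseteq S_2$ and $S_k\subseteq S_{k-1}$; (c) $S_{i-1}\cap S_i\neq\emptyset$ for $2\le i\le k$; (d) $S_{i-1}\neq S_i$ for $2\le i\le k$; (e) $(S_i\cap S_{i+1})\setminus S_1\neq\emptyset$ and $(S_{i-1}\cap S_i)\setminus S_k\neq\emptyset$ for $2\le i\le k-1$; (f) $(S_{i-1}\cup V_{i-1})\setminus S_i\neq\emptyset$ and $(S_i\cup V_i)\setminus S_{i-1}\neq\emptyset$ for $2\le i\le k$; and further (g) no empty P-node has an empty P-node as its parent, (h) no P-node has exactly one child whose root is a P-node, (i) every child subtree of a P-node is nonempty. *)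

(* Defs.v *)
From HB Require Import structures.
From mathcomp Require Import all_boot.
From Stdlib Require List.
Set Implicit Arguments. Unset Strict Implicit. Unset Printing Implicit Defensive.

Section Graphs.
Variable T : finType.

Definition simple_graph (e : rel T) : Prop := symmetric e /\ irreflexive e.

Definition del_edge (e : rel T) (x y : T) : rel T :=
  fun a b => e a b && ~~ (((a == x) && (b == y)) || ((a == y) && (b == x))).

(* Interval graph: vertices can be assigned closed intervals [l, r] (l <= r)
   such that distinct vertices are adjacent iff their intervals intersect.
   (Integer endpoints suffice for finite graphs.) *)
Definition interval_graph (e : rel T) : Prop :=
  exists f : T -> nat * nat,
    (forall v, (f v).1 <= (f v).2) /\
    (forall u v, u != v ->
       (e u v <-> maxn (f u).1 (f v).1 <= minn (f u).2 (f v).2)).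

Definition clique (e : rel T) (C : {set T}) : bool :=
  [forall x in C, forall y in C, (x != y) ==> e x y].

Definition maximal_clique (e : rel T) (C : {set T}) : Prop :=
  clique e C /\ forall D : {set T}, clique e D -> C \subset D -> D = C.

(* A P-node carries a set and a (possibly empty) list of
   nonempty child subtrees; a Q-node carries a list of positions, each with
   a section S_i and an optional (possibly empty) child subtree T_i. *)
Inductive mpq : Type :=
| PNode : {set T} -> seq mpq -> mpq
| QNode : seq ({set T} * option mpq) -> mpq.

Fixpoint subnodes (t : mpq) : seq mpq :=
  t :: match t with
       | PNode _ cs => flatten (map subnodes cs)
       | QNode ss => flatten (map (fun p => let: (_, o) := p in
                        match o with Some c => subnodes c | None => [::] end) ss)
       end.

Definition nodeset (n : mpq) : {set T} :=
  match n with
  | PNode X _ => X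
  | QNode ss => foldr (fun p A => p.1 :|: A) set0 ss
  end.

Definition verts (t : mpq) : {set T} :=
  foldr (fun n A => nodeset n :|: A) set0 (subnodes t).

Definition occ (v : T) (t : mpq) : nat :=
  count (fun n => v \in nodeset n) (subnodes t).

(* cliques obtained from the descending paths, read left to right *)
Fixpoint cliques (t : mpq) : seq {set T} :=
  match t with
  | PNode X [::] => [:: X]
  | PNode X cs => [seq X :|: C | C <- flatten (map cliques cs)]
  | QNode ss => flatten (map (fun p => let: (Sx, o) := p in
        match o with
        | None => [:: Sx]
        | Some c => [seq Sx :|: C | C <- cliques c]
        end) ss)
  end.

Definition choices (A : Type) (ls : seq (seq A)) : seq (seq A) :=
  foldr (fun xs acc => [seq x :: a | x <- xs, a <- acc]) [:: [::]] ls.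

(* all left-to-right clique orders obtained after arbitrarily permuting the
   children of P-nodes and reversing the positions of Q-nodes *)
Fixpoint orders (t : mpq) : seq (seq {set T}) :=
  match t with
  | PNode X [::] => [:: [:: X]]
  | PNode X cs =>
      [seq map (setU X) (flatten p) | l <- choices (map orders cs),
                                      p <- permutations l]
  | QNode ss =>
      let opts := map (fun p => let: (Sx, o) := p in
                    match o with
                    | None => [:: [:: Sx]]
                    | Some c => [seq map (setU Sx) s | s <- orders c]
                    end) ss in
      [seq flatten l | l <- choices opts] ++
      [seq flatten (rev l) | l <- choices opts]
  end.

Definition consecutive_clique_order (e : rel T) (s : seq {set T}) : Prop :=
  uniq s /\ (forall C, C \in s <-> maximal_clique e C) /\
  (forall v i j k, i <= j -> j <= k -> k < size s ->
     v \in nth set0 s i -> v \in nth set0 s k -> v \in nth set0 s j).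

Definition sec (ss : seq ({set T} * option mpq)) (i : nat) : {set T} :=
  (nth (set0, None) ss i).1.

Definition subV (ss : seq ({set T} * option mpq)) (i : nat) : {set T} :=
  match (nth (set0, None) ss i).2 with Some c => verts c | None => set0 end.

Definition node_ok (n : mpq) : Prop :=
  match n with
  | PNode X cs =>
      (X = set0 -> forall c, List.In c cs ->
                   forall Y ds, c = PNode Y ds -> Y <> set0) /\
      (forall c, cs = [:: c] -> forall Y ds, c <> PNode Y ds)
      (* (i) holds by construction: children of P-nodes are trees *)
  | QNode ss =>
      let k := size ss in
      let S := sec ss in
      let V := subV ss in
      3 <= k /\
      (forall v, v \in nodeset n -> exists l r, l < r /\ r < k /\
          forall i, i < k -> (v \in S i) = (l <= i <= r)) /\
      V 0 != set0 /\ V k.-1 != set0 /\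
      S 0 \subset S 1 /\ S k.-1 \subset S k.-2 /\
      (* (c),(d),(f) for 2 <= i <= k (1-indexed) *)
      (forall i, 1 <= i < k ->
         S i.-1 :&: S i != set0 /\ S i.-1 != S i /\
         (S i.-1 :|: V i.-1) :\: S i != set0 /\
         (S i :|: V i) :\: S i.-1 != set0) /\
      (* (e) for 2 <= i <= k-1 (1-indexed) *)
      (forall i, 1 <= i -> i <= k.-2 ->
         (S i :&: S i.+1) :\: S 0 != set0 /\
         (S i.-1 :&: S i) :\: S k.-1 != set0)
  end.

Definition is_MPQ_tree (e : rel T) (t : mpq) : Prop :=
  (forall v, occ v t = 1) /\
  (forall n, List.In n (subnodes t) -> node_ok n) /\
  uniq (cliques t) /\ (forall C, C \in cliques t <-> maximal_clique e C) /\
  (forall s, s \in orders t <-> consecutive_clique_order e s).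

Definition same_leaf_Pnode (t : mpq) (x y : T) : Prop :=
  exists X : {set T}, List.In (PNode X [::]) (subnodes t) /\ x \in X /\ y \in X.

End Graphs.

(* Main.v *)
Require Import Defs.
From HB Require Import structures.
From mathcomp Require Import all_boot zify.
From Stdlib Require List.
Set Implicit Arguments. Unset Strict Implicit. Unset Printing Implicit Defensive.
Lemma A1 a b c d : maxn a c <= minn b d -> a <= d. Proof. lia. Qed.
Lemma A2 lw rw lz rz p : lw <= p -> p <= rw -> lz <= p -> p <= rz -> maxn lw lz <= minn rw rz. Proof. lia. Qed.
Lemma A3 p : (maxn (3*p) (3*p+1) <= minn (3*p) (3*p+1)) = false. Proof. lia. Qed.
Lemma A3' p : (maxn (3*p+1) (3*p) <= minn (3*p+1) (3*p)) = false. Proof. lia. Qed.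
Lemma A4 l r p : (l <= p /\ p <= r) <-> maxn (3*p) (3*l) <= minn (3*p) (3*r+1). Proof. lia. Qed.
Lemma A5 l r p : (l <= p /\ p <= r) <-> maxn (3*p+1) (3*l) <= minn (3*p+1) (3*r+1). Proof. lia. Qed.
Lemma A4' l r p : (l <= p /\ p <= r) <-> maxn (3*l) (3*p) <= minn (3*r+1) (3*p). Proof. lia. Qed.
Lemma A5' l r p : (l <= p /\ p <= r) <-> maxn (3*l) (3*p+1) <= minn (3*r+1) (3*p+1). Proof. lia. Qed.
Lemma A7 a b c d : maxn a c <= minn b d <-> maxn (3*a) (3*c) <= minn (3*b+1) (3*d+1). Proof. lia. Qed.
Lemma A8 a b : a <= b -> 3*a <= 3*b+1. Proof. lia. Qed.

Section Aux.
Variable T : finType.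

Lemma pair_some_inj (A : Type) (a b : {set T}) (c0 c : A) :
  (a, Some c0) = (b, Some c) -> c0 = c.
Proof. by case. Qed.

Definition mpq_ind' (P : mpq T -> Prop)
  (HP : forall X cs, (forall c, List.In c cs -> P c) -> P (PNode X cs))
  (HQ : forall ss, (forall S c, List.In (S, Some c) ss -> P c) -> P (QNode ss)) :
  forall t, P t :=
  fix F t : P t := match t with
  | PNode X cs => HP X cs ((fix G cs : forall c, List.In c cs -> P c :=
       match cs with
       | [::] => fun c H => False_ind _ H
       | c0 :: cs' => fun c H => match H with
           | or_introl E => eq_ind c0 P (F c0) c E
           | or_intror H' => G cs' c H' end
       end) cs)
  | QNode ss => HQ ss ((fix G ss : forall S c, List.In (S, Some c) ss -> P c :=
       match ss with
       | [::] => fun S c H => False_ind _ H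
       | (S0, o) :: ss' => fun S c H => match H with
           | or_introl E =>
              (match o as o' return ((S0, o') = (S, Some c) -> P c) with
               | Some c0 => fun E => eq_ind c0 P (F c0) c (pair_some_inj E)
               | None => fun E => False_ind _ (ltac:(discriminate E))
               end) E
           | or_intror H' => G ss' S c H' end
       end) ss)
  end.


Lemma In_flatten_map (A B : Type) (f : A -> seq B) (s : seq A) (y : B) :
  List.In y (flatten (map f s)) -> exists a, List.In a s /\ List.In y (f a).
Proof.
elim: s => [|a s IH] //= /List.in_app_iff [H|H]; first by exists a; auto.
by case: (IH H) => b [H1 H2]; exists b; auto.
Qed.

Lemma mem_flatten_map (A : Type) (B : eqType) (f : A -> seq B) (s : seq A) a (y : B) :
  List.In a s -> y \in f a -> y \in flatten (map f s).
Proof.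
elim: s => [|b s IH] //= [->|H] Hy; rewrite mem_cat ?Hy //.
by rewrite IH ?orbT.
Qed.

Lemma sumn0_In (A : Type) (o : A -> nat) s a :
  sumn (map o s) = 0 -> List.In a s -> o a = 0.
Proof.
elim: s => [|b s IH] //= Hs [<-|H]; first by lia.
by apply: IH => //; lia.
Qed.

Lemma sumn_pt0 (A : Type) (g : A -> nat) s :
  (forall a, List.In a s -> g a = 0) -> sumn (map g s) = 0.
Proof.
elim: s => [|b s IH] //= H; rewrite H ?IH //; auto; by left.
Qed.

Lemma sum_lemma (A : Type) (s : seq A) (o g : A -> nat) (L : A -> Prop) :
  sumn (map o s) = 1 -> (exists a, List.In a s /\ L a) ->
  (forall a, List.In a s -> L a -> 1 <= o a) ->
  (forall a, List.In a s -> L a -> o a = 1 -> g a = 1) ->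
  (forall a, List.In a s -> o a = 0 -> g a = 0) -> sumn (map g s) = 1.
Proof.
elim: s => [|b s IH] /=; first by move=> _ [a [[]]].
move=> Hs [a [Ha La]] H1 H2 H3.
case Eo: (o b) => [|n].
  rewrite (H3 b (or_introl erefl) Eo) add0n.
  rewrite Eo add0n in Hs; apply: IH => //.
  - case: Ha => [Eb|Ha]; last by exists a.
    by subst b; move: (H1 a (or_introl erefl) La); rewrite Eo.
  - by move=> c Hc; apply: H1; right.
  - by move=> c Hc; apply: H2; right.
  - by move=> c Hc; apply: H3; right.
have Hn : n = 0 by lia.
subst n; have Hs0 : sumn (map o s) = 0 by lia.
case: Ha => [Eb|Ha]; last first.
  by have := H1 a (or_intror Ha) La; rewrite (sumn0_In Hs0 Ha).
subst b; rewrite H2 //; [|by left].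
by rewrite sumn_pt0 // => c Hc; apply: H3; [right|apply: sumn0_In Hs0 Hc].
Qed.

Lemma count1_uniq (A : eqType) (p : pred A) s a b :
  count p s = 1 -> a \in s -> b \in s -> p a -> p b -> a = b.
Proof.
elim: s => [|c s IH] //= Hc.
have Hz : forall d, d \in s -> p d -> count p s = 0 -> False.
  by move=> d Hd Pd /eqP; rewrite -leqn0 leqNgt -has_count => /hasP; apply; exists d.
case Pc: (p c) Hc => /= Hc.
  rewrite inE => /predU1P [->|Ha]; rewrite inE => /predU1P [->|Hb] Pa Pb //.
  - by case: (Hz b Hb Pb); lia.
  - by case: (Hz a Ha Pa); lia.
  - by case: (Hz a Ha Pa); lia.
rewrite !inE => /predU1P [Ea|Ha]; first by subst; rewrite Pc.
move=> /predU1P [Eb|Hb]; first by subst; rewrite Pc.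
exact: IH.
Qed.

End Aux.

Section Tree.
Variable T : finType.
Implicit Types (t : mpq T) (v : T) (ss : seq ({set T} * option (mpq T))) (cs : seq (mpq T)) (X Y S : {set T}).

Definition hq (p : {set T} * option (mpq T)) : seq {set T} :=
  let: (Sx, o) := p in match o with
        | None => [:: Sx]
        | Some c => [seq Sx :|: C | C <- cliques c]
        end.
Definition sq (p : {set T} * option (mpq T)) : seq (mpq T) :=
  let: (_, o) := p in match o with Some c => subnodes c | None => [::] end.
Definition oq v (p : {set T} * option (mpq T)) : nat :=
  let: (_, o) := p in match o with Some c => occ v c | None => 0 end.

Lemma subnodesP Y cs : subnodes (PNode Y cs) = PNode Y cs :: flatten (map (@subnodes T) cs).
Proof. by []. Qed.
Lemma subnodesQ ss : subnodes (QNode ss) = QNode ss :: flatten (map sq ss).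
Proof. by []. Qed.
Lemma cliquesP Y c cs : cliques (PNode Y (c :: cs)) =
  [seq Y :|: C | C <- flatten (map (@cliques T) (c :: cs))].
Proof. by []. Qed.
Lemma cliquesQ ss : cliques (QNode ss) = flatten (map hq ss).
Proof. by []. Qed.

Lemma occP v Y cs : occ v (PNode Y cs) = (v \in Y) + sumn (map (occ v) cs).
Proof.
rewrite /occ subnodesP /= count_flatten -map_comp; congr (_ + _).
Qed.

Lemma occQ v ss : occ v (QNode ss) = (v \in nodeset (QNode ss)) + sumn (map (oq v) ss).
Proof.
rewrite /occ subnodesQ /= count_flatten -map_comp; congr (_ + sumn _).
by apply: eq_map => -[S [c|]].
Qed.

Lemma nodesetQ_sub (ss : seq ({set T} * option (mpq T))) (S : {set T}) o : List.In (S, o) ss -> S \subset nodeset (QNode ss).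
Proof.
elim: ss => [|[S' o'] ss IH] //= [E|H].
  by case: E => -> _; apply: subsetUl.
exact: subset_trans (IH H) (subsetUr _ _).
Qed.

Lemma cnt_setU v (Y : {set T}) (l : seq {set T}) : v \notin Y ->
  count (fun C : {set T} => v \in C) [seq Y :|: C | C <- l] = count (fun C : {set T} => v \in C) l.
Proof.
move=> Hv; rewrite count_map; apply: eq_count => C /=.
by rewrite in_setU (negbTE Hv).
Qed.

Lemma In_count (A : Type) (p : pred A) s a : List.In a s -> p a -> 0 < count p s.
Proof.
elim: s => [|b s IH] //= [->|H] Pa; first by rewrite Pa.
by rewrite addn_gt0 IH ?orbT.
Qed.

Lemma In_sumn (A : Type) (o : A -> nat) s a : List.In a s -> o a <= sumn (map o s).
Proof.
elim: s => [|b s IH] //= [->|H]; first by rewrite leq_addr.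
by apply: leq_trans (IH H) (leq_addl _ _).
Qed.

Lemma cnt0 v t : occ v t = 0 -> count (fun C : {set T} => v \in C) (cliques t) = 0.
Proof.
elim/mpq_ind': t => [Y cs IH|ss IH].
  rewrite occP => H.
  have HY : v \notin Y by apply/negP => HY; rewrite HY in H.
  have Hs : sumn (map (occ v) cs) = 0 by lia.
  case: cs IH Hs H => [|c cs] IH Hs _; first by rewrite /= (negbTE HY).
  rewrite cliquesP cnt_setU // count_flatten -map_comp; apply: sumn_pt0 => c' Hc'.
  by apply: IH => //; apply: sumn0_In Hs Hc'.
rewrite occQ => H.
have HY : v \notin nodeset (QNode ss) by apply/negP => HY; rewrite HY in H.
have Hs : sumn (map (oq v) ss) = 0 by lia.
rewrite cliquesQ count_flatten -map_comp; apply: sumn_pt0 => -[S [c|]] Hin /=.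
  rewrite cnt_setU; last by apply: contra HY; apply: (subsetP (nodesetQ_sub Hin)).
  exact: (IH _ _ Hin (sumn0_In Hs Hin)).
have : v \notin S by apply: contra HY; apply: (subsetP (nodesetQ_sub Hin)).
by case: (v \in S).
Qed.

Lemma inleaf_occ X v t : List.In (PNode X [::]) (subnodes t) -> v \in X -> 0 < occ v t.
Proof. by move=> H Hv; apply: (In_count H). Qed.

Lemma childP X Y c cs : List.In (PNode X [::]) (subnodes (PNode Y (c :: cs))) ->
  exists c', List.In c' (c :: cs) /\ List.In (PNode X [::]) (subnodes c').
Proof.
rewrite subnodesP => -[E|H]; first by [].
exact: In_flatten_map H.
Qed.

Lemma childQ X ss : List.In (PNode X [::]) (subnodes (QNode ss)) ->
  exists S c, List.In (S, Some c) ss /\ List.In (PNode X [::]) (subnodes c).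
Proof.
rewrite subnodesQ => -[E|H]; first by [].
case: (In_flatten_map H) => -[S [c|]] [H1 H2] //.
by exists S, c.
Qed.

Lemma leaf_exists X t : List.In (PNode X [::]) (subnodes t) ->
  exists2 C, C \in cliques t & X \subset C.
Proof.
elim/mpq_ind': t => [Y cs IH|ss IH].
  case: cs IH => [|c cs] IH.
    rewrite subnodesP /= => -[E|[]]; case: E => ->.
    by exists X; rewrite ?inE.
  case/childP => c' [Hc' Hl]; case: (IH c' Hc' Hl) => C' HC' HX.
  exists (Y :|: C'); last exact: subset_trans HX (subsetUr _ _).
  by rewrite cliquesP; apply: map_f; apply: (mem_flatten_map Hc' HC').
case/childQ => S [c [Hc Hl]]; case: (IH S c Hc Hl) => C' HC' HX.
exists (S :|: C'); last exact: subset_trans HX (subsetUr _ _).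
by rewrite cliquesQ; apply: (mem_flatten_map (a := (S, Some c))) => //=; apply: map_f.
Qed.

Lemma leaf_count1 X v t : List.In (PNode X [::]) (subnodes t) -> v \in X ->
  occ v t = 1 -> count (fun C : {set T} => v \in C) (cliques t) = 1.
Proof.
move=> Hl Hv; elim/mpq_ind': t Hl => [Y cs IH|ss IH] Hl.
  case: cs IH Hl => [|c cs] IH Hl.
    by move: Hl; rewrite subnodesP /= => -[[->]|[]] _; rewrite Hv.
  case/childP: (Hl) => c' [Hc' Hl'].
  have Ho := inleaf_occ Hl' Hv; have Hs := In_sumn (occ v) Hc'.
  rewrite occP => H.
  have HY : v \notin Y by apply/negP => HY; rewrite HY in H; lia.
  have Hs1 : sumn (map (occ v) (c :: cs)) = 1 by lia.
  rewrite cliquesP cnt_setU // count_flatten -map_comp.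
  apply: (sum_lemma (L := fun c => List.In (PNode X [::]) (subnodes c)) Hs1).
  - by exists c'.
  - by move=> a _ La; apply: inleaf_occ La Hv.
  - by move=> a Ha La Oa; apply: IH.
  - by move=> a _ Oa; apply: cnt0.
case/childQ: (Hl) => S [c' [Hc' Hl']].
have Ho := inleaf_occ Hl' Hv; have Hs := In_sumn (oq v) Hc'.
rewrite occQ => H.
have HY : v \notin nodeset (QNode ss).
  by apply/negP => HY; rewrite HY /= in H; move: Hs; rewrite /=; lia.
have Hs1 : sumn (map (oq v) ss) = 1 by move: Hs; rewrite /=; lia.
rewrite cliquesQ count_flatten -map_comp.
apply: (sum_lemma (L := fun p => match p.2 with Some c => List.In (PNode X [::]) (subnodes c) | None => False end) Hs1).
- by exists (S, Some c').
- by move=> [S0 [c|]] _ La //=; apply: inleaf_occ La Hv.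
- move=> [S0 [c|]] Ha La Oa //=.
  rewrite cnt_setU; last by apply: contra HY; apply: (subsetP (nodesetQ_sub Ha)).
  exact: IH _ _ Ha La Oa.
- move=> [S0 [c|]] Ha Oa /=.
    rewrite cnt_setU; last by apply: contra HY; apply: (subsetP (nodesetQ_sub Ha)).
    exact: cnt0.
  have : v \notin S0 by apply: contra HY; apply: (subsetP (nodesetQ_sub Ha)).
  by case: (v \in S0).
Qed.

End Tree.

Lemma ext_max (T : finType) (e : rel T) (D : {set T}) : clique e D ->
  exists M, maximal_clique e M /\ D \subset M.
Proof.
move=> HD.
case: (@arg_maxnP _ D (fun C => clique e C && (D \subset C)) (fun C => #|C|)).
  by rewrite HD subxx.
move=> M /andP [HM HDM] Hmax; exists M; split => //; split => // E HE HME.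
apply/eqP; rewrite eq_sym eqEcard HME /=; apply: Hmax.
by rewrite HE (subset_trans HDM HME).
Qed.

Theorem mainTheorem3 (T : finType) (e : rel T) (t : mpq T) (x y : T) :
  simple_graph e -> interval_graph e -> is_MPQ_tree e t ->
  x != y -> same_leaf_Pnode t x y ->
  e x y /\ interval_graph (del_edge e x y).
Proof.
move=> [Hsym Hirr] [f [Hf Hrep]] [Hocc [_ [_ [HC _]]]] Hxy [X [Hl [Hx Hy]]].
have [C0 HC0 HXC0] := leaf_exists Hl.
have Hx0 : x \in C0 := subsetP HXC0 x Hx.
have Hy0 : y \in C0 := subsetP HXC0 y Hy.
have uniqx : forall M, M \in cliques t -> x \in M -> M = C0 :=
  fun M HM HxM => count1_uniq (leaf_count1 Hl Hx (Hocc x)) HM HC0 HxM Hx0.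
have uniqy : forall M, M \in cliques t -> y \in M -> M = C0 :=
  fun M HM HxM => count1_uniq (leaf_count1 Hl Hy (Hocc y)) HM HC0 HxM Hy0.
have [cl0 _] : maximal_clique e C0 := (HC C0).1 HC0.
have clP : forall a b, a \in C0 -> b \in C0 -> a != b -> e a b.
  move=> a b Ha Hb Hab; move/forallP: cl0 => /(_ a); rewrite Ha /= => /forallP /(_ b).
  by rewrite Hb Hab.
have nb : forall w, (forall M, M \in cliques t -> w \in M -> M = C0) ->
    forall z, e w z -> z \in C0.
  move=> w Hu z Hwz.
  have Hcl : clique e [set w; z].
    apply/forallP => a; apply/implyP => Ha; apply/forallP => b; apply/implyP => Hb.
    apply/implyP => Hab; move: Ha Hb Hab; rewrite !inE.
    by case/orP => /eqP -> /orP [] /eqP ->; rewrite ?eqxx // Hsym.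
  case: (ext_max Hcl) => M [HM HsubM].
  have HMt := (HC M).2 HM.
  have HwM : w \in M by apply: (subsetP HsubM); rewrite !inE eqxx.
  have HzM : z \in M by apply: (subsetP HsubM); rewrite !inE eqxx orbT.
  by rewrite -(Hu M HMt HwM).
pose p := \max_(v in C0) (f v).1.
have Hlp0 : forall z, z \in C0 -> (f z).1 <= p.
  by move=> z Hz; apply: (@leq_bigmax_cond _ (fun v => v \in C0) (fun v => (f v).1)).
have Hpr0 : forall z, z \in C0 -> (forall w, w \in C0 -> (f w).1 <= (f z).2) -> p <= (f z).2.
  by move=> z Hz H; apply/bigmax_leqP.
clearbody p.
have Hlp : forall z, z \in C0 -> (f z).1 <= p.
  exact: Hlp0.
have Hpr : forall z, z \in C0 -> p <= (f z).2.
  move=> z Hz; apply: Hpr0 => // w Hw; case: (eqVneq w z) => [->|Hwz]; first exact: Hf.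
  exact: A1 ((Hrep w z Hwz).1 (clP _ _ Hw Hz Hwz)).
have key : forall w, w \in C0 -> (forall z, e w z -> z \in C0) ->
    forall z, w != z -> (e w z <-> (f z).1 <= p /\ p <= (f z).2).
  move=> w Hw Hn z Hwz; split.
    by move=> /Hn Hz; split; [apply: Hlp | apply: Hpr].
  move=> [h1 h2]; apply/(Hrep w z Hwz).
  exact: A2 (Hlp w Hw) (Hpr w Hw) h1 h2.
have keyx := key x Hx0 (nb x uniqx).
have keyy := key y Hy0 (nb y uniqy).
split; first exact: clP.
exists (fun v => if v == x then (3 * p, 3 * p) else if v == y then (3 * p + 1, 3 * p + 1)
                 else (3 * (f v).1, 3 * (f v).2 + 1)).
split.
  move=> v; case: ifP => _ /=; first by [].
  by case: ifP => _ /=; [exact: leqnn | exact: A8 (Hf v)].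
move=> u v Huv; rewrite /del_edge.
have Hyx : y != x by rewrite eq_sym.
have simp := (negbTE Hxy, negbTE Hyx, andbT, andbF, andTb, andFb, orbF, orFb).
case: (eqVneq u x) => [?|Hux]; first subst u.
  case: (eqVneq v x) => [Evx|Hvx]; first by rewrite Evx eqxx in Huv.
  case: (eqVneq v y) => [?|Hvy]; first subst v.
    by rewrite /= !simp ?A3 ?A3'.
  rewrite /= !simp (keyx v ltac:(by rewrite eq_sym)).
  exact: A4.
case: (eqVneq u y) => [?|Huy]; first subst u.
  case: (eqVneq v x) => [?|Hvx]; first subst v.
    by rewrite /= !simp ?A3 ?A3'.
  case: (eqVneq v y) => [Evy|Hvy]; first by rewrite Evy eqxx in Huv.
  rewrite /= !simp (keyy v ltac:(by rewrite eq_sym)).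
  exact: A5.
case: (eqVneq v x) => [?|Hvx]; first subst v.
  rewrite /= !simp Hsym (keyx u ltac:(by rewrite eq_sym)).
  exact: A4'.
case: (eqVneq v y) => [?|Hvy]; first subst v.
  rewrite /= !simp Hsym (keyy u ltac:(by rewrite eq_sym)).
  exact: A5'.
rewrite /= !simp (Hrep u v Huv).
exact: A7.
Qed.
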